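(* Let $m<n$ be natural numbers, $Y=[\omega]^n$, $\mathcal{I}$ the ideal of thin subsets of $[\omega]^n$, and $\psi=\lambda^{(n-m)}\partial^{(n-m)}$. Suppose $S\subseteq[\omega]^n$ is not $(<\!\aleph_0)$-near-closed, and let $p,q\in\beta[\omega]^n$ be such that $p$ $\psi$-intertwines $q$ over $S$ modulo $\mathcal{I}$. Then $\pi^n_m(p)=\pi^n_m(q)$.
   Context: $T\subseteq[\omega]^k$ is thick if for every $j\geq k$ there is $s\in[\omega]^j$ with $[s]^k\subseteq T$; thin otherwise (thin sets form an ideal). For $T\subseteq[\omega]^n$, $\partial^{(n-m)}T=\{s\in[\omega]^m:\exists t\in[\omega]^{n-m}\ (s\cup t\in T)\}$, and for $A\subseteq[\omega]^m$, $\lambda^{(n-m)}A=\{s\in[\omega]^n:[s]^m\subseteq A\}$. For a thick ultrafilter $p$ on $[\omega]^n$, $\pi^n_m(p)$ is the unique thick ultrafilter $q'$ on $[\omega]^m$ such that $\{a\in[\omega]^n:[a]^m\subseteq R\}\in p$ for every $R\in q'$. Write $R\subseteq_{\mathcal{I}}T$ if $R\setminus T\in\mathcal{I}$. A set $T$ is closed if $\psi(T)=T$; near-closed if $T\,\Delta\,T'\in\mathcal{I}$ for some closed $T'$; $(<\!\aleph_0)$-near-closed if $T\,\Delta\,(T_0\cup\dots\cup T_{k-1})\in\mathcal{I}$ for some $k<\omega$ and closed $T_i$. For $S$ not $(<\!\aleph_0)$-near-closed, $p$ $\psi$-intertwines $q$ over $S$ modulo $\mathcal{I}$ if: (1) $S\setminus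 T\in p$ for every near-closed $T$ with $T\subseteq_{\mathcal{I}}S$; (2) $\psi(T)\setminus S\in q$ for every $T\in p$ with $T\subseteq S$; (3) $p$ and $q$ contain the complement of every member of $\mathcal{I}$. *)

(* Defs.v *)
From mathcomp Require Import all_boot finmap.
Set Implicit Arguments. Unset Strict Implicit. Unset Printing Implicit Defensive.
Local Open Scope fset_scope.

(* A subset of [omega]^<omega is a predicate on finite sets of naturals;
   a family of such subsets (e.g. an ultrafilter) is a predicate on those. *)
Definition fam := {fset nat} -> Prop.
Definition fam2 := fam -> Prop.

Definition Ysub (k : nat) : fam := fun s => #|` s| = k.

Definition incl (A B : fam) : Prop := forall s, A s -> B s.
Definition fdiff (A B : fam) : fam := fun s => A s /\ ~ B s.
Definition finter (A B : fam) : fam := fun s => A s /\ B s.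
Definition fsymdiff (A B : fam) : fam := fun s => (A s /\ ~ B s) \/ (B s /\ ~ A s).
Definition fempty : fam := fun _ => False.

Definition thick (k : nat) (T : fam) : Prop :=
  forall j, k <= j -> exists s : {fset nat}, #|` s| = j /\
    (forall t : {fset nat}, fsubset t s -> #|` t| = k -> T t).

Definition inI (n : nat) (A : fam) : Prop := incl A (Ysub n) /\ ~ thick n A.

Definition subI (n : nat) (R T : fam) : Prop := inI n (fdiff R T).

Definition shadow (n m : nat) (T : fam) : fam :=
  fun s => #|` s| = m /\ exists t : {fset nat}, #|` t| = n - m /\ T (s `|` t).

Definition lift (n m : nat) (A : fam) : fam :=
  fun s => #|` s| = n /\ (forall t : {fset nat}, fsubset t s -> #|` t| = m -> A t).

Definition psi (n m : nat) (T : fam) : fam := lift n m (shadow n m T).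

Definition closed_set (n m : nat) (T : fam) : Prop := psi n m T = T.

Definition near_closed (n m : nat) (T : fam) : Prop :=
  exists T', closed_set n m T' /\ inI n (fsymdiff T T').

Definition fin_near_closed (n m : nat) (T : fam) : Prop :=
  exists (k : nat) (Ts : nat -> fam),
    (forall i, i < k -> closed_set n m (Ts i)) /\
    inI n (fsymdiff T (fun s => exists i, i < k /\ Ts i s)).

Definition ultrafilter_on (Y : fam) (p : fam2) : Prop :=
  (forall A, p A -> incl A Y) /\
  [/\ p Y,
      ~ p fempty,
      (forall A B, p A -> p B -> p (finter A B)),
      (forall A B, p A -> incl A B -> incl B Y -> p B) &
      (forall A, incl A Y -> p A \/ p (fdiff Y A))].

Definition thick_ultrafilter (k : nat) (p : fam2) : Prop :=
  ultrafilter_on (Ysub k) p /\ forall A, p A -> thick k A.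

(* q' is a thick ultrafilter on [omega]^m satisfying the defining property
   of pi^n_m(p). *)
Definition is_proj (n m : nat) (p q' : fam2) : Prop :=
  thick_ultrafilter m q' /\
  forall R, q' R -> p (fun a => #|` a| = n /\
                        forall t : {fset nat}, fsubset t a -> #|` t| = m -> R t).

Definition is_pi (n m : nat) (p q' : fam2) : Prop :=
  is_proj n m p q' /\ forall q'', is_proj n m p q'' -> q'' = q'.

Definition intertwines (n m : nat) (S : fam) (p q : fam2) : Prop :=
  [/\ ~ fin_near_closed n m S,
      (forall T, near_closed n m T -> subI n T S -> p (fdiff S T)),
      (forall T, p T -> incl T S -> q (fdiff (psi n m T) S)) &
      (forall A, inI n A -> p (fdiff (Ysub n) A) /\ q (fdiff (Ysub n) A))].

(* Main.v *)
Require Import Defs.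
From mathcomp Require Import all_boot finmap.
From Stdlib Require Import Classical FunctionalExtensionality PropExtensionality.
Set Implicit Arguments. Unset Strict Implicit. Unset Printing Implicit Defensive.
Local Open Scope fset_scope.

Lemma ex_ext (t s : {fset nat}) k : t `<=` s -> #|`t| <= k <= #|`s| ->
  exists a, t `<=` a /\ a `<=` s /\ #|`a| = k.
Proof.
move=> ts; elim: k => [|k IH] /andP[h1 h2].
  by exists t; split => //; split => //; apply/eqP; rewrite -leqn0.
case: (eqVneq #|`t| k.+1) => [e|ne]; first by exists t.
have h3: #|`t| <= k by rewrite -ltnS ltn_neqAle ne h1.
have [a' [ta' [a's ca']]] := IH ltac:(by rewrite h3 ltnW).
have : s `\` a' != fset0.
  by rewrite -cardfs_gt0 cardfsDS // ca' subn_gt0.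
case/fset0Pn => x; rewrite in_fsetD => /andP[xa' xs].
exists (x |` a'); split; first exact: fsubset_trans ta' (fsubsetU1 _ _).
split; first by rewrite fsubUset fsub1set xs.
by rewrite cardfsU1 xa' ca'.
Qed.

Lemma ex_sub (s : {fset nat}) k : k <= #|`s| -> exists a, a `<=` s /\ #|`a| = k.
Proof.
move=> h; have [a [_ [? ?]]] := @ex_ext fset0 s k (fsub0set _) ltac:(by rewrite cardfs0 h).

by exists a.
Qed.

Definition hom m (P:fam) k (s:{fset nat}) := exists a, a `<=` s /\ #|`a| = k /\
  forall t, t `<=` a -> #|`t| = m -> P t.

Definition RamN m k l N := forall (P Q : fam) s,
  (forall t, t `<=` s -> #|`t| = m -> P t \/ Q t) -> N <= #|`s| ->
  hom m P k s \/ hom m Q l s.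

Lemma hom_mono m P k a s : a `<=` s -> hom m P k a -> hom m P k s.
Proof.
move=> as_ [b [ba [cb hb]]]; exists b; split => //; exact: fsubset_trans ba as_.
Qed.

Lemma hom0 m P s : hom m.+1 P 0 s.
Proof.
exists fset0; split; first exact: fsub0set.
split; first by rewrite cardfs0.
by move=> t /fsubset_leq_card; rewrite cardfs0 leqn0 => /eqP ->.
Qed.

Lemma lift_hom m (P:fam) x a' a s : x \in s -> x \notin a -> a' `<=` a -> a `<=` s ->
  (forall t, t `<=` a' -> #|`t| = m.+1 -> P t) ->
  (forall t, t `<=` a -> #|`t| = m -> P (x |` t)) -> hom m.+1 P (#|`a'|.+1) s.
Proof.
move=> xs xa a'a as_ h1 h2.
have xa' : x \notin a' by apply: contra xa; apply: (fsubsetP a'a).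
exists (x |` a'); split; first by rewrite fsubUset fsub1set xs (fsubset_trans a'a as_).
split; first by rewrite cardfsU1 xa'.
move=> t tsub ct.
case xt: (x \in t).
  rewrite -(fsetD1K xt); apply: h2.
    apply: fsubset_trans _ a'a; by rewrite fsubDset.
  by move: ct; rewrite (cardfsD1 x) xt add1n => -[].
apply: h1 => //.
rewrite -(mem_fsetD1 (negbT xt)) fsubDset //.
Qed.

Lemma ramsey m : forall k l, exists N, RamN m k l N.
Proof.
elim: m => [|m IHm] k l.
  exists (maxn k l) => P Q s cov hs.
  case: (cov fset0 (fsub0set _) (cardfs0 _)) => h.
    left; have [a [as_ ca]] := ex_sub (k:=k) (leq_trans (leq_maxl _ _) hs).
    exists a; do 2!split => //; move=> t _ /cardfs0_eq -> //.
  right; have [a [as_ ca]] := ex_sub (k:=l) (leq_trans (leq_maxr _ _) hs).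
  exists a; do 2!split => //; move=> t _ /cardfs0_eq -> //.
suff: forall n k l, (k + l <= n)%N -> exists N, RamN m.+1 k l N by move/(_ (k + l)%N k l (leqnn _)).
elim=> [|n IHn] {}k {}l.
  rewrite leqn0 addn_eq0 => /andP[/eqP -> _].
  by exists 0 => P Q s _ _; left; exact: hom0.
case: k => [|k]; first by exists 0 => P Q s _ _; left; exact: hom0.
case: l => [|l]; first by exists 0 => P Q s _ _; right; exact: hom0.
rewrite addSn ltnS => hkl.
have [N1 h1] := IHn k l.+1 hkl.
have [N2 h2] := IHn k.+1 l ltac:(by rewrite addSn -addnS).
have [N0 h0] := IHm N1 N2.
exists N0.+1 => P Q s cov hs.
have : s != fset0 by rewrite -cardfs_gt0 (leq_trans _ hs).
case/fset0Pn => x xs.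
pose s' := s `\ x.
have xs' : x \notin s' by rewrite in_fsetD1 eqxx.
have s's : s' `<=` s by apply: fsubD1set.
have cs' : N0 <= #|`s'| by move: hs; rewrite (cardfsD1 x) xs add1n ltnS.
have cov' : forall t, t `<=` s' -> #|`t| = m ->
    (fun t => P (x |` t)) t \/ (fun t => Q (x |` t)) t.
  move=> t ts ct; apply: cov.
    by rewrite fsubUset fsub1set xs (fsubset_trans ts s's).
  have xt : x \notin t by apply: contra xs'; apply: (fsubsetP ts).
  by rewrite cardfsU1 xt ct.
have cova : forall a, a `<=` s -> forall t, t `<=` a -> #|`t| = m.+1 -> P t \/ Q t.
  by move=> a as_ t ta; apply: cov; apply: fsubset_trans ta as_.
case: (h0 _ _ _ cov' cs') => [[a [as' [ca ha]]]|[a [as' [ca ha]]]].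
  have as_ := fsubset_trans as' s's.
  have xa : x \notin a by apply: contra xs'; apply: (fsubsetP as').
  case: (h1 P Q a (cova a as_)) => [|[a' [a'a [ca' ha']]]|]; first by rewrite ca.
    left; rewrite -ca'; exact: lift_hom xs xa a'a as_ ha' ha.
  by move=> hh; right; exact: hom_mono as_ hh.
have as_ := fsubset_trans as' s's.
have xa : x \notin a by apply: contra xs'; apply: (fsubsetP as').
case: (h2 P Q a (cova a as_)) => [|hh|[a' [a'a [ca' ha']]]]; first by rewrite ca.
  by left; exact: hom_mono as_ hh.
right; rewrite -ca'; exact: lift_hom xs xa a'a as_ ha' ha.
Qed.

Definition lam n m (R : fam) : fam := fun a => #|`a| = n /\
  forall t : {fset nat}, fsubset t a -> #|` t| = m -> R t.
Definition piOf n m (p : fam2) : fam2 := fun R => incl R (Ysub m) /\ p (lam n m R).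

Lemma uf_empty Y p A : ultrafilter_on Y p -> p A -> incl A fempty -> False.
Proof.
move=> [hs [hY h0 hI hup hU]] pA hA; apply: h0; apply: hup pA hA _.
by move=> s [].
Qed.

Lemma uf_disj Y p A B : ultrafilter_on Y p -> p A -> p B -> incl (finter A B) fempty -> False.
Proof.
move=> up pA pB h; apply: (uf_empty up _ h); case: up => _ [_ _ hI _ _]; exact: hI.
Qed.

Lemma uf_thick n p : ultrafilter_on (Ysub n) p ->
  (forall A, inI n A -> p (fdiff (Ysub n) A)) -> forall A, p A -> thick n A.
Proof.
move=> up hI A pA; apply: NNPP => nt.
have := hI A (conj (proj1 up A pA) nt) => pc.
apply: (uf_disj up pA pc) => s [h1 [_ h2]] //.
Qed.

Lemma lam_empty n m R a : m <= n -> lam n m R a -> exists t, t `<=` a /\ #|`t| = m /\ R t.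
Proof.
move=> mn [ca h]; have [t [ta ct]] := ex_sub (s:=a) (k:=m) ltac:(by rewrite ca).
by exists t; split => //; split => //; apply: h.
Qed.

Lemma proj_unique n m p q'' : m <= n -> ultrafilter_on (Ysub n) p ->
  is_proj n m p q'' -> q'' = piOf n m p.
Proof.
move=> mn up [[uq _] hq].
apply: functional_extensionality => R; apply: propositional_extensionality; split.
  by move=> qR; split; [exact: (proj1 uq R qR) | exact: hq].
move=> [RY pR]; case: uq => _ [_ _ _ _ /(_ R RY)] [] // qc.
exfalso; have := hq _ qc => pc.
apply: (uf_disj up pR pc) => a [ha hc].
have [t [ta [ct Rt]]] := lam_empty mn ha.
by case: hc => _ /(_ t ta ct) [].
Qed.

Lemma pi_proj n m p : m <= n -> ultrafilter_on (Ysub n) p ->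
  (forall A, inI n A -> p (fdiff (Ysub n) A)) -> is_proj n m p (piOf n m p).
Proof.
move=> mn up hI; have pth := uf_thick up hI.
have [hs [hY h0 hI2 hup hU]] := up.
have lamY : forall R, incl (lam n m R) (Ysub n) by move=> R s [].
split; last by move=> R [].
split; last first.
  move=> A [AY pA] j mj.
  have [s [cs hs']] := pth _ pA (maxn j n) (leq_maxr _ _).
  have [s' [s's cs']] := ex_sub (s:=s) (k:=j) ltac:(by rewrite cs leq_maxl).
  exists s'; split => // t ts' ct.
  have ts := fsubset_trans ts' s's.
  have [a [ta [a_s ca]]] := @ex_ext t s n ts ltac:(by rewrite ct mn cs leq_maxr).
  by have [_ ] := hs' a a_s ca; apply.
split; first by move=> A [].
split.
- split => //; apply: hup hY _ (lamY _) => s hs1; split => //.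
- move=> [_ pE]; apply: (uf_empty up pE) => a ha.
  by have [t [_ [_ []]]] := lam_empty mn ha.
- move=> A B [AY pA] [BY pB]; split; first by move=> s [/AY].
  apply: hup (hI2 _ _ pA pB) _ (lamY _) => a [[ca ha] [_ hb]]; split => // t ta ct.
  by split; [apply: ha | apply: hb].
- move=> A B [AY pA] AB BY; split => //.
  apply: hup pA _ (lamY _) => a [ca ha]; split => // t ta ct; apply: AB; exact: ha.
move=> R RY.
case: (classic (p (lam n m R))) => [pR|npR]; first by left.
case: (classic (p (lam n m (fdiff (Ysub m) R)))) => [pR'|npR']; first by right; split => // s [].
exfalso.
have c1 : p (fdiff (Ysub n) (lam n m R)) by case: (hU _ (lamY R)).
have c2 : p (fdiff (Ysub n) (lam n m (fdiff (Ysub m) R))) by case: (hU _ (lamY (fdiff (Ysub m) R))).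
set M := finter (fdiff (Ysub n) (lam n m R)) (fdiff (Ysub n) (lam n m (fdiff (Ysub m) R))).
have pM : p M by apply: hI2.
have MY : incl M (Ysub n) by move=> s [[]].
have [N hN] := ramsey m n n.
have thM : ~ thick n M.
  move=> th; have [s [cs hs']] := th (maxn N n) (leq_maxr _ _).
  have cov : forall t, t `<=` s -> #|`t| = m -> R t \/ (fun t => ~ R t) t.
    by move=> t _ _; apply: classic.
  case: (hN R (fun t => ~ R t) s cov) => [|[a [a_s [ca ha]]]|[a [a_s [ca ha]]]].
  + by rewrite cs leq_maxl.
  + by have [[_ []]] := hs' a a_s ca; split.
  + have [_ [_ []]] := hs' a a_s ca; split => // t ta ct; split; [exact: ct | exact: ha].
have := hI M (conj MY thM) => pc.
apply: (uf_disj up pM pc) => s [h1 [_ h2]] //.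
Qed.

Lemma thin_empty n (A : fam) : incl A fempty -> inI n A.
Proof.
move=> h; split; first by move=> s /h.
move=> th; have [s [cs hs]] := th n (leqnn _).
exact: (h s (hs s (fsubset_refl _) cs)).
Qed.

Lemma empty_near m n : m <= n -> near_closed n m fempty.
Proof.
move=> mn; exists fempty; split.
  apply: functional_extensionality => s; apply: propositional_extensionality; split => //.
  move=> [cs h]; have [t [ts ct]] := ex_sub (s:=s) (k:=m) ltac:(by rewrite cs).
  by have [_ [u [_ []]]] := h t ts ct.
by apply: thin_empty => s [[]|[]].
Qed.

Theorem mainTheorem11 (m n : nat) (S : fam) (p q : fam2) :
  m < n ->
  incl S (Ysub n) ->
  ~ fin_near_closed n m S ->
  ultrafilter_on (Ysub n) p ->
  ultrafilter_on (Ysub n) q ->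
  intertwines n m S p q ->
  exists pi : fam2, is_pi n m p pi /\ is_pi n m q pi.
Proof.
move=> mn SY nfc up uq [_ h2 h3 h4].
have mn' : m <= n := ltnW mn.
have hIp : forall A, inI n A -> p (fdiff (Ysub n) A) by move=> A /h4 [].
have hIq : forall A, inI n A -> q (fdiff (Ysub n) A) by move=> A /h4 [].
have projp := pi_proj mn' up hIp.
have projq : is_proj n m q (piOf n m p).
  split; first exact: projp.1.
  move=> R [RY pR].
  have pS : p (fdiff S fempty).
    apply: h2; first exact: empty_near.
    by apply: thin_empty => s [].
  have [_ [_ _ hIn hup _]] := up.
  have [_ [_ _ _ hupq _]] := uq.
  have pT := hIn _ _ pS pR.
  have := h3 _ pT (fun s h => h.1.1) => qT.
  apply: (hupq _ (lam n m R) qT); last by move=> s [].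
  move=> s [[cs hs] _]; split => // t ts ct.
  have [_ [u [_ [_ [_ hl]]]]] := hs t ts ct.
  apply: hl => //; exact: fsubsetUl.
exists (piOf n m p); split.
  by split => // q'' h; apply: proj_unique h.
split => // q'' h.
by rewrite (proj_unique mn' uq h) (proj_unique mn' uq projq).
Qed.
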